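(* Let $\mathcal E$ be a nest on a complex Banach space $X$ and let $\Psi$ be an essential support function on $\mathcal E$. Then: (i) $\mathcal M^e(\Psi)$ is a $\mathcal T(\mathcal E)$-bimodule containing every $\mathcal T(\mathcal E)$-bimodule $\mathcal J$ with $\Phi^e_{\mathcal J}=\Psi$; (ii) $\mathcal M^0(\Psi)$ is a $\mathcal T(\mathcal E)$-bimodule contained in every norm-closed $\mathcal T(\mathcal E)$-bimodule $\mathcal J$ with $\Phi^e_{\mathcal J}=\Psi$.
   Context: A nest $\mathcal E$ on $X$ is a family of closed linear subspaces of $X$, totally ordered by inclusion, containing $\{0\}$ and $X$, closed under arbitrary meets $\wedge$ (intersections) and joins $\vee$ (norm-closed linear spans of unions). For $E\in\mathcal E$, $E_-=\vee\{F\in\mathcal E: F\subsetneq E\}$ and $E_+=\wedge\{F\in\mathcal E: E\subsetneq F\}$. $\mathcal T(\mathcal E)=\{T\in\mathcal B(X): TE\subseteq E\ \forall E\in\mathcal E\}$; a $\mathcal T(\mathcal E)$-bimodule is a linear subspace $\mathcal J\subseteq\mathcal B(X)$ with $\mathcal T(\mathcal E)\mathcal J,\mathcal J\mathcal T(\mathcal E)\subseteq\mathcal J$. For subspaces $M,L$ ($L$ closed), $M/L=\{m+L:m\in M\}$ and $\dim(M/L)$ is its dimension. $\mathcal E_f=\{N\in\mathcal E: 0<\dim(N/N_-)<\infty\}$. An essential support function is an inclusion-preserving map $\Psi:\mathcal E\to\mathcal E$ such that for all $N,N_1,N_2\in\mathcal E$ with $N_1\subseteq N_2$: (a) $\Psi(N)\in\mathcal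 E_f\Rightarrow\Psi(N)=\Psi(N)_+$; (b) $\dim(N_2/N_1)<\infty\Rightarrow\Psi(N_2)=\Psi(N_1)$. For a bimodule $\mathcal J$, $\Phi^e_{\mathcal J}(N)=\wedge\{L\in\mathcal E: \dim(TN/L)<\infty\ \forall T\in\mathcal J\}$. Define $\mathcal M^e(\Psi)=\{T\in\mathcal B(X): \dim(TN/L)<\infty$ for all $N,L\in\mathcal E$ with $L_+\supsetneq\Psi(N)\}$ and $\mathcal M^0(\Psi)$ = the norm closure of $\sum_{L,N\in\mathcal E,\ L_-\subsetneq\Psi(N)}\operatorname{span}\{f\otimes x: f\in(N_-)^\perp, x\in L\}$, where $S^\perp=\{f\in X^*: f(S)=\{0\}\}$ and $f\otimes x$ is $y\mapsto f(y)x$. *)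

(* Defs.v *)
From mathcomp Require Import all_boot all_order all_algebra.
From mathcomp Require Export complex.
From mathcomp Require Export all_classical all_reals all_analysis.
Export numFieldNormedType.Exports.

Set Implicit Arguments.
Unset Strict Implicit.
Unset Printing Implicit Defensive.

Import Order.TTheory GRing.Theory Num.Theory.
Local Open Scope classical_set_scope.
Local Open Scope ring_scope.

Section NestDefs.
Context {K : numFieldType} {X : normedModType K}.

Definition subspace (M : set X) : Prop :=
  M 0 /\ (forall x y, M x -> M y -> M (x + y)) /\ (forall (a : K) x, M x -> M (a *: x)).
Definition closed_subspace (M : set X) : Prop := subspace M /\ closed M.

Definition lspan (A : set X) : set X :=
  [set x | exists (n : nat) (c : 'I_n -> K) (v : 'I_n -> X),
      (forall i, A (v i)) /\ x = \sum_(i < n) c i *: v i].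

Definition nmeet (S : set (set X)) : set X := \bigcap_(E in S) E.
Definition njoin (S : set (set X)) : set X := closure (lspan (\bigcup_(E in S) E)).

Definition is_nest (E : set (set X)) : Prop :=
  (forall M, E M -> closed_subspace M) /\
  (forall M N, E M -> E N -> M `<=` N \/ N `<=` M) /\
  E [set 0] /\ E setT /\
  (forall S, S `<=` E -> E (nmeet S)) /\
  (forall S, S `<=` E -> E (njoin S)).

Definition nminus (E : set (set X)) (N : set X) : set X :=
  njoin [set F | E F /\ F `<=` N /\ F <> N].
Definition nplus (E : set (set X)) (N : set X) : set X :=
  nmeet [set F | E F /\ N `<=` F /\ N <> F].

(* dim (M/L) < oo, with M/L = {m + L : m in M}: finitely many elements of M
   span M modulo L *)
Definition findim_quot (M L : set X) : Prop :=
  exists (n : nat) (v : 'I_n -> X), (forall i, M (v i)) /\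
    forall m, M m -> exists w, lspan (range v) w /\ L (m - w).

(* E_f : 0 < dim(N/N_-) < oo *)
Definition nest_f (E : set (set X)) (N : set X) : Prop :=
  E N /\ ~ (N `<=` nminus E N) /\ findim_quot N (nminus E N).

Definition ess_support_function (E : set (set X)) (Psi : set X -> set X) : Prop :=
  [/\ (forall N, E N -> E (Psi N)),
      (forall N1 N2, E N1 -> E N2 -> N1 `<=` N2 -> Psi N1 `<=` Psi N2),
      (forall N, E N -> nest_f E (Psi N) -> Psi N = nplus E (Psi N)) &
      (forall N1 N2, E N1 -> E N2 -> N1 `<=` N2 -> findim_quot N2 N1 ->
         Psi N2 = Psi N1)].

Definition bounded_op (T : X -> X) : Prop :=
  (forall (a : K) x y, T (a *: x + y) = a *: T x + T y) /\ continuous T.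
Definition dual_vec (f : X -> K) : Prop :=
  (forall (a : K) x y, f (a *: x + y) = a * f x + f y) /\ continuous f.
Definition annihilator (S : set X) : set (X -> K) :=
  [set f | dual_vec f /\ forall x, S x -> f x = 0].
Definition rank1 (f : X -> K) (x : X) : X -> X := fun y => f y *: x.

Definition nest_alg (E : set (set X)) : set (X -> X) :=
  [set T | bounded_op T /\ forall N, E N -> T @` N `<=` N].

Definition bimodule (E : set (set X)) (J : set (X -> X)) : Prop :=
  [/\ J `<=` bounded_op, J (fun _ => 0),
      (forall S T, J S -> J T -> J (fun y => S y + T y)),
      (forall (a : K) T, J T -> J (fun y => a *: T y)) &
      (forall A T, nest_alg E A -> J T -> J (A \o T) /\ J (T \o A))].

Definition op_span (G : set (X -> X)) : set (X -> X) :=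
  [set T | exists (n : nat) (c : 'I_n -> K) (S : 'I_n -> X -> X),
      (forall i, G (S i)) /\ forall y, T y = \sum_(i < n) c i *: S i y].
Definition op_closure (S : set (X -> X)) : set (X -> X) :=
  [set T | bounded_op T /\ forall e : K, 0 < e ->
     exists S', S S' /\ forall x, `|T x - S' x| <= e * `|x|].
Definition norm_closed (J : set (X -> X)) : Prop := op_closure J `<=` J.

Definition Phi_e (E : set (set X)) (J : set (X -> X)) (N : set X) : set X :=
  nmeet [set L | E L /\ forall T, J T -> findim_quot (T @` N) L].

Definition Me (E : set (set X)) (Psi : set X -> set X) : set (X -> X) :=
  [set T | bounded_op T /\ forall N L, E N -> E L ->
     Psi N `<=` nplus E L -> Psi N <> nplus E L -> findim_quot (T @` N) L].

Definition M0 (E : set (set X)) (Psi : set X -> set X) : set (X -> X) :=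
  op_closure (op_span
    [set T | exists L N f x, E L /\ E N /\
        (nminus E L `<=` Psi N /\ nminus E L <> Psi N) /\
        annihilator (nminus E N) f /\ L x /\ T = rank1 f x]).

End NestDefs.

(* Main.v *)
Require Import Defs.
From mathcomp Require Import all_boot all_order all_algebra.
From mathcomp Require Import complex.
From mathcomp Require Import all_classical all_reals all_analysis.
From mathcomp Require Import ring lra.
Import numFieldNormedType.Exports.
Import Order.TTheory GRing.Theory Num.Theory.
Local Open Scope classical_set_scope.
Local Open Scope ring_scope.
Set Implicit Arguments.
Unset Strict Implicit.
Unset Printing Implicit Defensive.
Local Notation lsub := Defs.subspace.

Section LinAlg.
Context {K : numFieldType} {X : normedModType K}.

Lemma sub0 (M : set X) : lsub M -> M 0. Proof. by rewrite /Defs.subspace; case. Qed.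
Lemma subD (M : set X) x y : lsub M -> M x -> M y -> M (x + y).
Proof. by rewrite /Defs.subspace; case=> _ [h _]; apply: h. Qed.
Lemma subZ (M : set X) (a : K) x : lsub M -> M x -> M (a *: x).
Proof. by rewrite /Defs.subspace; case=> _ [_ h]; apply: h. Qed.
Lemma subN (M : set X) x : lsub M -> M x -> M (- x).
Proof. by move=> sM Mx; rewrite -scaleN1r; apply: subZ. Qed.
Lemma subB (M : set X) x y : lsub M -> M x -> M y -> M (x - y).
Proof. by move=> sM Mx My; apply: subD => //; apply: subN. Qed.

Lemma zmod_helper (V : zmodType) (m km0 dz a kb : V) :
  m - km0 - (a - kb) = m - (dz + a) - (km0 - (dz + kb)).
Proof.
rewrite !opprD !opprK !addrA; congr (_ + _).
by rewrite (addrAC (m - dz - a)) (addrAC (m - dz)) subrK addrAC.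
Qed.

Definition comb (ps : seq (K * X)) : X := \sum_(p <- ps) p.1 *: p.2.

Lemma comb_cat (ps qs : seq (K * X)) : comb (ps ++ qs) = comb ps + comb qs.
Proof. by rewrite /comb big_cat. Qed.

Definition scl (k : K) (ps : seq (K * X)) := [seq (k * p.1, p.2) | p <- ps].

Lemma comb_scl k (ps : seq (K * X)) : comb (scl k ps) = k *: comb ps.
Proof.
rewrite /comb big_map scaler_sumr; apply: eq_bigr => p _ /=.
by rewrite scalerA.
Qed.

Lemma scl_in k (ps : seq (K * X)) (s : seq X) : (forall p, p \in ps -> p.2 \in s) ->
  forall p, p \in scl k ps -> p.2 \in s.
Proof. by move=> H p /mapP[q qin ->] /=; apply: H. Qed.

Lemma cat_in (ps qs : seq (K * X)) (s : seq X) : (forall p, p \in ps -> p.2 \in s) ->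
  (forall p, p \in qs -> p.2 \in s) ->
  forall p, p \in ps ++ qs -> p.2 \in s.
Proof. by move=> H1 H2 p; rewrite mem_cat => /orP[/H1|/H2]. Qed.

Definition fq (M L : set X) := exists s : seq X, forall m, M m ->
  exists ps : seq (K * X), (forall p, p \in ps -> p.2 \in s) /\ L (m - comb ps).

Lemma comb_split (z : X) (s : seq X) (ps : seq (K * X)) : (forall p, p \in ps -> p.2 \in z :: s) ->
  exists c ps', (forall p, p \in ps' -> p.2 \in s) /\ comb ps = c *: z + comb ps'.
Proof.
elim: ps => [|q ps IH] H.
  by exists 0, [::]; split => //; rewrite /comb !big_nil scale0r addr0.
have [|c [ps' [H1 H2]]] := IH.
  by move=> p pin; apply: H; rewrite inE pin orbT.
have := H q; rewrite inE eqxx => /(_ isT); rewrite inE => /orP[/eqP qz|qs].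
  exists (q.1 + c), ps'; split => //.
  by rewrite /comb big_cons -/(comb ps) H2 qz scalerDl addrA.
exists c, (q :: ps'); split.
  by move=> p; rewrite inE => /orP[/eqP ->|/H1].
rewrite /comb !big_cons -/(comb ps) -/(comb ps') H2.
by rewrite addrCA.
Qed.

Lemma fq_extract (L : set X) : lsub L -> forall (s : seq X) (M : set X),
  lsub M ->
  (forall m, M m -> exists ps, (forall p, p \in ps -> p.2 \in s) /\ L (m - comb ps)) ->
  exists sq : seq X, (forall x, x \in sq -> M x) /\ forall m, M m ->
  exists ps, (forall p, p \in ps -> p.2 \in sq) /\ L (m - comb ps).
Proof.
move=> sL; elim=> [|z s IH] M sM HM.
  exists [::]; split; first by []. 
  move=> m Mm; exists [::]; split => //.
  have [ps [H1 H2]] := HM m Mm.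
  suff E0 : ps = [::] by rewrite -E0.
  by case: ps H1 {H2} => // p ps /(_ p); rewrite inE eqxx => /(_ isT).
pose M' := [set m | M m /\ exists ps, (forall p, p \in ps -> p.2 \in s) /\ L (m - comb ps)].
have sM' : lsub M'.
  split; [|split].
  - split; first exact: sub0.
    by exists [::]; split => //; rewrite /comb big_nil subr0; apply: sub0.
  - move=> x y [Mx [px [px1 px2]]] [My [py [py1 py2]]]; split; first exact: subD.
    exists (px ++ py); split; first exact: cat_in.
    rewrite comb_cat opprD addrACA; exact: subD.
  - move=> a x [Mx [px [px1 px2]]]; split; first exact: subZ.
    exists (scl a px); split; first exact: scl_in.
    by rewrite comb_scl -scalerBr; apply: subZ.
have [sq [sq1 sq2]] := IH M' sM' (fun m Mm => Mm.2).
have [allM|] := pselect (forall m, M m -> M' m).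
  exists sq; split; first by move=> x /sq1 [].
  by move=> m /allM /sq2.
move=> /existsNP [m0 /not_implyP [Mm0 nM'm0]].
have [ps0 [ps01 ps02]] := HM m0 Mm0.
have [c0 [ps0' [H01 H02]]] := comb_split ps01.
have c0N : c0 != 0.
  apply/negP => /eqP c00; apply: nM'm0; split => //; exists ps0'; split => //.
  by move: ps02; rewrite H02 c00 scale0r add0r.
exists (m0 :: sq); split.
  by move=> x; rewrite inE => /orP[/eqP ->|/sq1 []].
move=> m Mm.
have [ps [ps1 ps2]] := HM m Mm.
have [d [ps' [H1 H2]]] := comb_split ps1.
have M'm : M' (m - (d / c0) *: m0).
  split; first by apply: subB => //; apply: subZ.
  exists (ps' ++ scl (- (d / c0)) ps0'); split.
    by apply: cat_in => //; apply: scl_in.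
  have -> : m - (d / c0) *: m0 - comb (ps' ++ scl (- (d / c0)) ps0') =
     (m - comb ps) - (d / c0) *: (m0 - comb ps0).
    rewrite comb_cat comb_scl H2 H02 !scalerBr !scalerDr scalerA mulfVK //.
    by rewrite scaleNr (zmod_helper _ _ (d *: z)).
  by apply: subB => //; apply: subZ.
have [qs [qs1 qs2]] := sq2 _ M'm.
exists ((d / c0, m0) :: qs); split.
  by move=> p; rewrite inE => /orP[/eqP -> /=|/qs1]; rewrite inE ?eqxx // => ->; rewrite orbT.
by rewrite /comb big_cons -/(comb qs) opprD addrA.
Qed.



Lemma fd_fq (M L : set X) : findim_quot M L -> fq M L.
Proof.
move=> [n [v [Mv H]]].
exists [seq v i | i <- enum 'I_n] => m Mm.
have [w [[k [c [v' [rv' ->]]]] Lw]] := H m Mm.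
exists [seq (c i, v' i) | i <- enum 'I_k]; split.
  move=> p /mapP [i _ ->] /=; have [j _ <-] := rv' i.
  by apply: map_f; rewrite mem_enum.
by rewrite /comb big_map big_enum.
Qed.

Lemma fq_fd (M L : set X) : lsub M -> lsub L -> fq M L -> findim_quot M L.
Proof.
move=> sM sL [s Hs].
have [sq [sq1 sq2]] := fq_extract sL sM Hs.
exists (size sq), (fun i : 'I_(size sq) => nth 0 sq i); split.
  by move=> i; apply: sq1; apply: mem_nth.
move=> m Mm; have [ps [ps1 ps2]] := sq2 m Mm.
exists (comb ps); split => //.
exists (size ps), (fun i : 'I_(size ps) => (nth (0%R : K, 0%R : X) ps i).1),
  (fun i : 'I_(size ps) => (nth (0%R : K, 0%R : X) ps i).2); split.
  move=> i; have : (nth (0%R : K, 0%R : X) ps i).2 \in sq by apply: ps1; apply: mem_nth.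
  move=> hin; have hi : (index (nth (0%R : K, 0%R : X) ps i).2 sq < size sq)%N by rewrite index_mem.
  exists (Ordinal hi) => //=.
  by rewrite nth_index.
by rewrite /comb (big_nth (0%R : K, 0%R : X)) big_mkord.
Qed.

Definition lin (T : X -> X) := forall (a : K) x y, T (a *: x + y) = a *: T x + T y.

Lemma lin0 T : lin T -> T 0 = 0.
Proof.
move=> lT; have := lT 1 0 0; rewrite !scale1r addr0 => h.
by apply: (addrI (T 0)); rewrite addr0 -h.
Qed.
Lemma linD T x y : lin T -> T (x + y) = T x + T y.
Proof. by move=> lT; have := lT 1 x y; rewrite !scale1r. Qed.
Lemma linZ T a x : lin T -> T (a *: x) = a *: T x.
Proof. by move=> lT; rewrite -[a *: x]addr0 lT lin0 // addr0. Qed.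
Lemma linN T x : lin T -> T (- x) = - T x.
Proof. by move=> lT; rewrite -scaleN1r linZ // scaleN1r. Qed.
Lemma linB T x y : lin T -> T (x - y) = T x - T y.
Proof. by move=> lT; rewrite linD // linN. Qed.
Lemma lin_comb T (ps : seq (K * X)) : lin T ->
  T (comb ps) = comb [seq (p.1, T p.2) | p <- ps].
Proof.
move=> lT; rewrite /comb big_map; elim: ps => [|p ps IH].
  by rewrite !big_nil lin0.
by rewrite !big_cons linD // linZ // IH.
Qed.

Lemma lsub_img T (N : set X) : lin T -> lsub N -> lsub (T @` N).
Proof.
move=> lT sN; split; [|split].
- by exists 0; [apply: sub0|apply: lin0].
- by move=> _ _ [x Nx <-] [y Ny <-]; exists (x + y); [apply: subD|apply: linD].
- by move=> a _ [x Nx <-]; exists (a *: x); [apply: subZ|apply: linZ].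
Qed.

Lemma fq_sub (M M' L : set X) : M `<=` M' -> fq M' L -> fq M L.
Proof. by move=> MM' [s Hs]; exists s => m /MM'; apply: Hs. Qed.

Lemma fq_lsub (M L L' : set X) : L `<=` L' -> fq M L -> fq M L'.
Proof.
move=> LL [s Hs]; exists s => m /Hs [ps [H1 H2]]; exists ps; split => //.
exact: LL.
Qed.



Lemma fq_add (S T : X -> X) (N L : set X) : lsub L ->
  fq (S @` N) L -> fq (T @` N) L -> fq ((fun y => S y + T y) @` N) L.
Proof.
move=> sL [s1 H1] [s2 H2]; exists (s1 ++ s2) => _ [n Nn <-].
have [ps1 [p11 p12]] := H1 (S n) (ex_intro2 _ _ n Nn erefl).
have [ps2 [p21 p22]] := H2 (T n) (ex_intro2 _ _ n Nn erefl).
exists (ps1 ++ ps2); split.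
  by move=> p; rewrite mem_cat mem_cat => /orP[/p11 -> //|/p21 ->]; rewrite orbT.
by rewrite comb_cat opprD addrACA; apply: subD.
Qed.

Lemma fq_scale (a : K) (T : X -> X) (N L : set X) : lsub L ->
  fq (T @` N) L -> fq ((fun y => a *: T y) @` N) L.
Proof.
move=> sL [s H]; exists s => _ [n Nn <-].
have [ps [p1 p2]] := H (T n) (ex_intro2 _ _ n Nn erefl).
exists (scl a ps); split; first exact: scl_in.
by rewrite comb_scl -scalerBr; apply: subZ.
Qed.

Lemma fq_compL (A T : X -> X) (N L : set X) : lin A -> (forall x, L x -> L (A x)) ->
  fq (T @` N) L -> fq ((A \o T) @` N) L.
Proof.
move=> lA AL [s H]; exists [seq A x | x <- s] => _ [n Nn <-].
have [ps [p1 p2]] := H (T n) (ex_intro2 _ _ n Nn erefl).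
exists [seq (p.1, A p.2) | p <- ps]; split.
  by move=> _ /mapP [p pin ->] /=; apply: map_f; apply: p1.
by rewrite -lin_comb //= -linB //; apply: AL.
Qed.

Lemma fq_compR (A T : X -> X) (N L : set X) : (forall x, N x -> N (A x)) ->
  fq (T @` N) L -> fq ((T \o A) @` N) L.
Proof.
move=> AN; apply: fq_sub => _ [n Nn <-]; exists (A n) => //; exact: AN.
Qed.

Lemma fq_zero (N L : set X) : lsub L -> fq ((fun _ : X => 0 : X) @` N) L.
Proof.
move=> sL; exists [::] => _ [n Nn <-]; exists [::]; split => //.
by rewrite /comb big_nil subr0; apply: sub0.
Qed.

End LinAlg.

Section Nest.
Context {K : numFieldType} {X : normedModType K}.
Variable E : set (set X).
Hypothesis hE : is_nest E.

Lemma nest_lsub M : E M -> lsub M.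
Proof. by case: hE => h _ /h []. Qed.
Lemma nest_closed M : E M -> closed M.
Proof. by case: hE => h _ /h []. Qed.
Lemma nest_total M N : E M -> E N -> M `<=` N \/ N `<=` M.
Proof. by case: hE => _ [h _]; apply: h. Qed.
Lemma nest_join S : S `<=` E -> E (njoin S).
Proof. by case: hE => _ [_ [_ [_ [_ h]]]]; apply: h. Qed.
Lemma nest_meet S : S `<=` E -> E (nmeet S).
Proof. by case: hE => _ [_ [_ [_ [h _]]]]; apply: h. Qed.
Lemma nminus_in N : E (nminus E N).
Proof. by apply: nest_join => F []. Qed.
Lemma nplus_in N : E (nplus E N).
Proof. by apply: nest_meet => F []. Qed.

Lemma lspan_self (A : set X) x : A x -> lspan A x.
Proof.
move=> Ax; exists 1%N, (fun _ => 1), (fun _ => x); split => //.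
by rewrite big_ord1 scale1r.
Qed.

Lemma lt_nminus M N : E M -> M `<=` N -> M <> N -> M `<=` nminus E N.
Proof.
move=> EM MN MneN x Mx; apply: subset_closure; apply: lspan_self.
by exists M.
Qed.

Lemma nmeet_inf (S : set (set X)) F : S F -> nmeet S `<=` F.
Proof. by move=> SF x; apply. Qed.

Lemma nmeet_sub (S S' : set (set X)) : S `<=` S' -> nmeet S' `<=` nmeet S.
Proof. by move=> SS x H F /SS; apply: H. Qed.





Lemma bop_lin (T : X -> X) : bounded_op T -> lin T.
Proof. by case. Qed.

Lemma bop_zero : bounded_op (fun _ : X => 0 : X).
Proof.
split; first by move=> a x y; rewrite scaler0 addr0.
by move=> x; apply: cvg_cst.
Qed.

Lemma bop_add (S T : X -> X) : bounded_op S -> bounded_op T -> bounded_op (fun y => S y + T y).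
Proof.
move=> [lS cS] [lT cT]; split.
  by move=> a x y; rewrite lS lT scalerDr addrACA.
by move=> x; apply: cvgD; [apply: cS|apply: cT].
Qed.

Lemma bop_scale (a : K) (T : X -> X) : bounded_op T -> bounded_op (fun y => a *: T y).
Proof.
move=> [lT cT]; split.
  by move=> b x y; rewrite lT scalerDr !scalerA mulrC.
by move=> x; apply: cvgZr; apply: cT.
Qed.

Lemma bop_comp (A T : X -> X) : bounded_op A -> bounded_op T -> bounded_op (A \o T).
Proof.
move=> [lA cA] [lT cT]; split.
  by move=> b x y /=; rewrite lT lA.
by move=> x; apply: continuous_comp; [apply: cT|apply: cA].
Qed.



Lemma nalg_inv A M : nest_alg E A -> E M -> forall x, M x -> M (A x).
Proof. by move=> [_ H] EM x Mx; apply: (H M EM); exists x. Qed.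

Lemma Me_fd (Psi : set X -> set X) (T : X -> X) N L : bounded_op T -> E N -> E L ->
  fq (T @` N) L -> findim_quot (T @` N) L.
Proof.
move=> bT EN EL H; apply: fq_fd => //; last exact: nest_lsub.
by apply: lsub_img; [apply: bop_lin|apply: nest_lsub].
Qed.

Lemma Me_bimod (Psi : set X -> set X) : bimodule E (Me E Psi).
Proof.
split.
- by move=> T [].
- split; first exact: bop_zero.
  move=> N L EN EL _ _; apply: Me_fd => //; first exact: bop_zero.
  by apply: fq_zero; apply: nest_lsub.
- move=> S T [bS HS] [bT HT]; split; first exact: bop_add.
  move=> N L EN EL h1 h2; apply: Me_fd => //; first exact: bop_add.
  apply: fq_add; first exact: nest_lsub.
    by apply: fd_fq; apply: HS.
  by apply: fd_fq; apply: HT.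
- move=> a T [bT HT]; split; first exact: bop_scale.
  move=> N L EN EL h1 h2; apply: Me_fd => //; first exact: bop_scale.
  apply: fq_scale; first exact: nest_lsub.
  by apply: fd_fq; apply: HT.
- move=> A T nA [bT HT]; have bA := nA.1; split; split.
  + exact: bop_comp.
  + move=> N L EN EL h1 h2; apply: Me_fd => //; first exact: bop_comp.
    apply: fq_compL; first exact: bop_lin.
      exact: nalg_inv.
    by apply: fd_fq; apply: HT.
  + exact: bop_comp.
  + move=> N L EN EL h1 h2; apply: Me_fd => //; first exact: bop_comp.
    apply: fq_compR; first exact: nalg_inv.
    by apply: fd_fq; apply: HT.
Qed.

Lemma fd_mono (M L L' : set X) : L `<=` L' -> findim_quot M L -> findim_quot M L'.
Proof.
move=> LL [n [v [H1 H2]]]; exists n, v; split => // m /H2 [w [w1 w2]].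
by exists w; split => //; apply: LL.
Qed.

Lemma J_sub_Me (Psi : set X -> set X) (J : set (X -> X)) : bimodule E J ->
  (forall N, E N -> Phi_e E J N = Psi N) -> J `<=` Me E Psi.
Proof.
move=> [Jb _ _ _ _] HPhi T JT; split; first exact: Jb.
move=> N L EN EL PsiL PsiNL.
pose S := [set L' | E L' /\ forall T, J T -> findim_quot (T @` N) L'].
have PsiE : Psi N = nmeet S by rewrite -HPhi.
have [[L' [SL' L'L]]|noL'] := pselect (exists L', S L' /\ L' `<=` L).
  by apply: fd_mono L'L _; apply: SL'.2.
exfalso; apply: PsiNL; apply/seteqP; split => //.
rewrite PsiE; apply: nmeet_sub => L' SL'; split; first exact: SL'.1.
have [L'L|LL'] := nest_total SL'.1 EL.
  by exfalso; apply: noL'; exists L'.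
split => // eqLL'; apply: noL'; exists L'; split => //; by rewrite -eqLL'.
Qed.



Lemma bop_bound (A : X -> X) : bounded_op A ->
  exists2 C : K, 0 < C & forall y, `|A y| <= C * `|y|.
Proof.
move=> [lA cA].
have := cA 0; rewrite /continuous_at (lin0 lA) => /cvgr0Pnorm_lt /(_ 1 ltr01).
move=> /nbhs_norm0P [d /= d0 Hd].
exists (2 / d); first by rewrite divr_gt0.
move=> y; have [->|y0] := eqVneq y 0; first by rewrite (lin0 lA) !normr0 mulr0.
have ny0 : 0 < `|y| by rewrite normr_gt0.
pose t := d / (2 * `|y|).
have t0 : 0 < t by rewrite divr_gt0 // mulr_gt0.
have : `|A (t *: y)| < 1.
  apply: Hd => /=; rewrite normrZ gtr0_norm // /t -mulrA mulrC -mulrA.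
  rewrite invfM -mulrA mulKf ?gt_eqF //.
  by rewrite gtr_pMl // invf_lt1 // ltr1n.
rewrite (linZ _ _ lA) normrZ gtr0_norm // => h.
rewrite -(ler_pM2l t0) mulrA.
have -> : t * (2 / d) = `|y|^-1.
  rewrite /t; field.
  by rewrite !gt_eqF.
by rewrite mulVf ?gt_eqF // ltW.
Qed.



Definition ospan (G : set (X -> X)) : set (X -> X) :=
  [set T | exists ps : seq (K * (X -> X)), (forall p, List.In p ps -> G p.2) /\
     forall y, T y = \sum_(p <- ps) p.1 *: p.2 y].

Lemma In_map_ex {A B : Type} {f : A -> B} {s : seq A} {b} :
  List.In b [seq f a | a <- s] -> exists a, List.In a s /\ b = f a.
Proof.
elim: s => [//|a s IH] /= [<-|/IH [a' [H1 H2]]]; first by exists a; split; [left|].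
by exists a'; split; [right|].
Qed.

Lemma In_nth (A : Type) (d : A) (s : seq A) i : (i < size s)%N -> List.In (nth d s i) s.
Proof.
elim: s i => [//|a s IH] [|i] /= h; [by left|right; exact: IH].
Qed.

Lemma op_span_ospan G : op_span G `<=` ospan G.
Proof.
move=> T [n [c [S [GS HT]]]].
exists [seq (c i, S i) | i <- enum 'I_n]; split.
  by move=> p /In_map_ex [i [_ ->]]; apply: GS.
by move=> y; rewrite HT big_map big_enum.
Qed.

Lemma ospan_op_span G : ospan G `<=` op_span G.
Proof.
move=> T [ps [Gps HT]].
pose d : K * (X -> X) := (0, fun _ => 0).
exists (size ps), (fun i => (nth d ps i).1), (fun i => (nth d ps i).2); split.
  by move=> i; apply: Gps; apply: In_nth.
by move=> y; rewrite HT (big_nth d) big_mkord.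
Qed.

Lemma ospan_add G S T : ospan G S -> ospan G T -> ospan G (fun y => S y + T y).
Proof.
move=> [ps [G1 H1]] [qs [G2 H2]]; exists (ps ++ qs); split.
  by move=> p /List.in_app_iff [/G1|/G2].
by move=> y; rewrite big_cat H1 H2.
Qed.

Lemma ospan_scale G a T : ospan G T -> ospan G (fun y => a *: T y).
Proof.
move=> [ps [G1 H1]]; exists [seq (a * p.1, p.2) | p <- ps]; split.
  by move=> p /In_map_ex [q [qin ->]] /=; apply: G1.
by move=> y; rewrite big_map H1 scaler_sumr; apply: eq_bigr => p _; rewrite scalerA.
Qed.



Lemma lin_sum (A : X -> X) (I : Type) (s : seq I) (F : I -> X) : lin A ->
  A (\sum_(i <- s) F i) = \sum_(i <- s) A (F i).
Proof.
move=> lA; elim: s => [|i s IH]; first by rewrite !big_nil lin0.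
by rewrite !big_cons linD // IH.
Qed.

Lemma ospan_compL G A T : lin A -> (forall S, G S -> G (A \o S)) ->
  ospan G T -> ospan G (A \o T).
Proof.
move=> lA GA [ps [G1 H1]]; exists [seq (p.1, A \o p.2) | p <- ps]; split.
  by move=> p /In_map_ex [q [qin ->]] /=; apply: GA; apply: G1.
move=> y /=; rewrite big_map H1 lin_sum //; apply: eq_bigr => p _.
by rewrite linZ.
Qed.

Lemma ospan_compR G A T : (forall S, G S -> G (S \o A)) ->
  ospan G T -> ospan G (T \o A).
Proof.
move=> GA [ps [G1 H1]]; exists [seq (p.1, p.2 \o A) | p <- ps]; split.
  by move=> p /In_map_ex [q [qin ->]] /=; apply: GA; apply: G1.
by move=> y /=; rewrite big_map H1.
Qed.

Lemma ospan_zero G : ospan G (fun _ => 0).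
Proof. by exists [::]; split => // y; rewrite big_nil. Qed.

Lemma ocl_zero (P : set (X -> X)) : P (fun _ => 0) -> op_closure P (fun _ => 0).
Proof.
move=> P0; split; first exact: bop_zero.
by move=> e e0; exists (fun _ => 0); split => // x; rewrite subr0 normr0 mulr_ge0 // ltW.
Qed.

Lemma ocl_add (P : set (X -> X)) S T :
  (forall S T, P S -> P T -> P (fun y => S y + T y)) ->
  op_closure P S -> op_closure P T -> op_closure P (fun y => S y + T y).
Proof.
move=> Padd [bS HS] [bT HT]; split; first exact: bop_add.
move=> e e0; have e20 : 0 < e / 2 by rewrite divr_gt0.
have [S' [PS' HS']] := HS _ e20; have [T' [PT' HT']] := HT _ e20.
exists (fun y => S' y + T' y); split; first exact: Padd.
move=> x; rewrite opprD addrACA; apply: le_trans (ler_normD _ _) _.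
apply: le_trans (lerD (HS' x) (HT' x)) _.
by rewrite -mulrDl -splitr.
Qed.

Lemma ocl_scale (P : set (X -> X)) a T :
  (forall T, P T -> P (fun y => a *: T y)) ->
  op_closure P T -> op_closure P (fun y => a *: T y).
Proof.
move=> Psc [bT HT]; split; first exact: bop_scale.
move=> e e0; have a10 : 0 < `|a| + 1 by rewrite ltr_wpDl.
have ea0 : 0 < e / (`|a| + 1) by rewrite divr_gt0.
have [T' [PT' HT']] := HT _ ea0.
exists (fun y => a *: T' y); split; first exact: Psc.
move=> x; rewrite -scalerBr normrZ.
apply: le_trans (ler_wpM2l (normr_ge0 _) (HT' x)) _.
rewrite mulrA ler_wpM2r // mulrA ler_pdivrMr //.
by rewrite mulrDr mulr1 mulrC lerDl ltW.
Qed.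

Lemma ocl_compL (P : set (X -> X)) A T : bounded_op A ->
  (forall T, P T -> P (A \o T)) ->
  op_closure P T -> op_closure P (A \o T).
Proof.
move=> bA PA [bT HT]; split; first exact: bop_comp.
have [C C0 HC] := bop_bound bA.
move=> e e0; have eC : 0 < e / C by rewrite divr_gt0.
have [T' [PT' HT']] := HT _ eC.
exists (A \o T'); split; first exact: PA.
move=> x /=; rewrite -linB; last exact: bop_lin.
apply: le_trans (HC _) _; apply: le_trans (ler_wpM2l (ltW C0) (HT' x)) _.
by rewrite mulrA mulrCA mulfV ?gt_eqF // mulr1.
Qed.

Lemma ocl_compR (P : set (X -> X)) A T : bounded_op A ->
  (forall T, P T -> P (T \o A)) ->
  op_closure P T -> op_closure P (T \o A).
Proof.
move=> bA PA [bT HT]; split; first exact: bop_comp.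
have [C C0 HC] := bop_bound bA.
move=> e e0; have eC : 0 < e / C by rewrite divr_gt0.
have [T' [PT' HT']] := HT _ eC.
exists (T' \o A); split; first exact: PA.
move=> x /=; apply: le_trans (HT' (A x)) _.
apply: le_trans (ler_wpM2l (ltW eC) (HC x)) _.
by rewrite mulrA mulfVK ?gt_eqF.
Qed.



Definition G0 (Psi : set X -> set X) : set (X -> X) :=
  [set T | exists L N f x, E L /\ E N /\
        (nminus E L `<=` Psi N /\ nminus E L <> Psi N) /\
        annihilator (nminus E N) f /\ L x /\ T = rank1 f x].

Lemma M0E Psi : M0 E Psi = op_closure (op_span (G0 Psi)).
Proof. by []. Qed.

Lemma G0_compL Psi A S : nest_alg E A -> G0 Psi S -> G0 Psi (A \o S).
Proof.
move=> nA [L [N [f [x [EL [EN [h1 [h2 [Lx ->]]]]]]]]].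
exists L, N, f, (A x); do 4 (split => //); split; first exact: (nalg_inv nA EL).
apply: funext => y /=; rewrite /rank1 linZ //; exact: (bop_lin nA.1).
Qed.

Lemma G0_compR Psi A S : nest_alg E A -> G0 Psi S -> G0 Psi (S \o A).
Proof.
move=> nA [L [N [f [x [EL [EN [h1 [[[lf cf] h2] [Lx ->]]]]]]]]].
have lA := bop_lin nA.1.
exists L, N, (f \o A), x; do 3 (split => //); split; last by split.
split; last by move=> z hz /=; apply: h2; apply: (nalg_inv nA (nminus_in _)).
split; first by move=> a u v /=; rewrite lA lf.
by move=> z; apply: continuous_comp; [apply: nA.1.2|apply: cf].
Qed.

Lemma M0_bimod (Psi : set X -> set X) : bimodule E (M0 E Psi).
Proof.
rewrite M0E; split.
- by move=> T [].
- by apply: ocl_zero; apply: ospan_op_span; apply: ospan_zero.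
- move=> S T; apply: ocl_add => S' T' /op_span_ospan h1 /op_span_ospan h2.
  by apply: ospan_op_span; apply: ospan_add.
- move=> a T; apply: ocl_scale => T' /op_span_ospan h1.
  by apply: ospan_op_span; apply: ospan_scale.
- move=> A T nA HT; split.
  + apply: ocl_compL HT; first exact: nA.1.
    move=> T' /op_span_ospan h; apply: ospan_op_span; apply: ospan_compL h.
      exact: (bop_lin nA.1).
    by move=> S; apply: G0_compL.
  + apply: ocl_compR HT; first exact: nA.1.
    move=> T' /op_span_ospan h; apply: ospan_op_span; apply: ospan_compR h.
    by move=> S; apply: G0_compR.
Qed.



Lemma rank1_nalg N f u : E N -> annihilator (nminus E N) f -> N u ->
  nest_alg E (rank1 f u).
Proof.
move=> EN [[lf cf] hf] Nu; split.
  split; first by move=> a x y; rewrite /rank1 lf scalerDl scalerA.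
  by move=> z; apply: continuousZl; apply: cf.
move=> M EM _ [z Mz <-]; rewrite /rank1.
have [NM|MN] := nest_total EN EM.
  by apply: subZ; [apply: nest_lsub|apply: NM].
have [MeqN|MneN] := pselect (M = N).
  by rewrite MeqN; apply: subZ => //; apply: nest_lsub.
rewrite hf; first by rewrite scale0r; apply: sub0; apply: nest_lsub.
exact: (lt_nminus EM MN MneN).
Qed.

Lemma ocl_mono (P Q : set (X -> X)) : P `<=` Q -> op_closure P `<=` op_closure Q.
Proof.
move=> PQ T [bT HT]; split => // e e0; have [S [PS HS]] := HT e e0.
by exists S; split => //; apply: PQ.
Qed.

Lemma ospan_sub (G J : set (X -> X)) : bimodule E J -> G `<=` J -> ospan G `<=` J.
Proof.
move=> [_ J0 JD JZ _] GJ T [ps [Gps HT]].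
have -> : T = fun y => \sum_(p <- ps) p.1 *: p.2 y by apply: funext.
elim: ps {HT} Gps => [|p ps IH] Gps.
  suff -> : (fun y : X => \sum_(p <- [::]) p.1 *: p.2 y) = fun _ : X => (0 : X) by [].
  by apply: funext => y; rewrite big_nil.
have -> : (fun y : X => \sum_(q <- p :: ps) q.1 *: q.2 y) =
  fun y => p.1 *: p.2 y + \sum_(q <- ps) q.1 *: q.2 y
  by apply: funext => y; rewrite big_cons.
apply: JD; first by apply: JZ; apply: GJ; apply: Gps; left.
by apply: IH => q qin; apply: Gps; right.
Qed.

Lemma dual0 (g : X -> K) : dual_vec g -> g 0 = 0.
Proof.
move=> [lg _]; have := lg 1 0 0; rewrite scale1r mul1r addr0 => h.
by apply: (addrI (g 0)); rewrite addr0 -h.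
Qed.

Lemma dualZ (g : X -> K) a x : dual_vec g -> g (a *: x) = a * g x.
Proof. by move=> dg; rewrite -[a *: x]addr0 dg.1 dual0 // addr0. Qed.

Definition HBprop := forall (L : set X) y, lsub L -> closed L -> ~ L y ->
  exists g : X -> K, dual_vec g /\ (forall x, L x -> g x = 0) /\ g y = 1.

Lemma M0_sub_J (hb : HBprop) (Psi : set X -> set X) (J : set (X -> X)) :
  bimodule E J -> norm_closed J ->
  (forall N, E N -> Phi_e E J N = Psi N) -> M0 E Psi `<=` J.
Proof.
move=> bJ ncJ HPhi; rewrite M0E => T HT; apply: ncJ.
apply: ocl_mono HT => S /op_span_ospan; apply: ospan_sub => //.
move=> _ [L [N [f [x [EL [EN [[h1 h2] [hf [Lx ->]]]]]]]]].
have [T' [u [JT' [Nu nT'u]]]] : exists T' u, J T' /\ N u /\ ~ nminus E L (T' u).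
  apply: contrapT => hno; apply: h2; apply/seteqP; split => //.
  rewrite -HPhi //; apply: nmeet_inf; split; first exact: nminus_in.
  move=> T2 JT2; exists 0%N, (fun _ => 0); split; first by case.
  move=> _ [n Nn <-]; exists 0; split.
    by exists 0%N, (fun _ => 0), (fun _ => 0); split; [case|rewrite big_ord0].
  rewrite subr0; apply: contrapT => hn; apply: hno; exists T2, n; split => //.
have [g [dg [hg gT'u]]] := hb _ _ (nest_lsub (nminus_in L))
  (nest_closed (nminus_in L)) nT'u.
have nA : nest_alg E (rank1 g x) by apply: (rank1_nalg EL).
have nB : nest_alg E (rank1 f u) by apply: (rank1_nalg EN).
case: bJ => Jb _ _ _ Jm.
have lT' := bop_lin (Jb _ JT').
have := (Jm _ _ nB (Jm _ _ nA JT').1).2.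
have -> // : ((rank1 g x \o T') \o rank1 f u) = rank1 f x.
apply: funext => y /=; rewrite /rank1 (linZ _ _ lT').
by rewrite dualZ // gT'u mulr1.
Qed.

End Nest.

Section HB.
Context {R : realType} {X : normedModType R[i]}.
Local Open Scope complex_scope.
Local Notation Re := (@complex.Re R).
Local Notation Im := (@complex.Im R).

Definition nx (x : X) : R := Re `|x|.

Lemma normX_real (x : X) : `|x| = (nx x)%:C.
Proof. by rewrite /nx RRe_real // normr_real. Qed.

Lemma nx_ge0 x : 0 <= nx x.
Proof. by have := normr_ge0 x; rewrite lecE => /andP [_ h]. Qed.

Lemma nxD x y : nx (x + y) <= nx x + nx y.
Proof. by rewrite -lecR rmorphD /= -!normX_real ler_normD. Qed.

Lemma normC_real (t : R[i]) : `|t| = (Re `|t|)%:C.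
Proof. by rewrite RRe_real // normr_real. Qed.

Lemma nxZ (t : R[i]) x : nx (t *: x) = Re `|t| * nx x.
Proof.
by apply: complexI; rewrite rmorphM /= -normX_real -normC_real -normX_real normrZ.
Qed.

Lemma normRC (r : R) : Re `|r%:C| = `|r|.
Proof. by rewrite normc_def /= expr0n /= addr0 sqrtr_sqr. Qed.

Lemma nxN x : nx (- x) = nx x.
Proof. by rewrite /nx normrN. Qed.

Lemma Re_le_norm (t : R[i]) : Re t <= Re `|t|.
Proof.
apply: le_trans (ler_norm (Re t)) _.
have := normc_ge_Re t; rewrite lecE => /andP [_ h]; exact: h.
Qed.



Lemma dist_pos (L : set X) y : closed L -> ~ L y ->
  exists2 dr : R, 0 < dr & forall l, L l -> dr <= nx (y - l).
Proof.
move=> cL nLy.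
have : ~ closure L y by move=> /cL.
move=> /existsNP [B /not_implyP [nB /set0P/negP]]; rewrite negbK => /eqP LB.
move: nB => /nbhs_normP [e /= e0 He].
exists (Re e); first by move: e0; rewrite ltcE => /andP [].
move=> l Ll; rewrite -lecR -normX_real.
have eR : e \is Num.real by apply: gtr0_real.
have : ~ (`|y - l| < e).
  by move=> /He Bl; have : (L `&` B) l by []; rewrite LB.
rewrite RRe_real //; move=> h; rewrite real_leNgt ?normr_real //.
by apply/negP.
Qed.



Definition Pg (H : set (X * R)) : Prop :=
  [/\ (forall x a b, H (x, a) -> H (x, b) -> a = b),
      (forall x a x' b, H (x, a) -> H (x', b) -> H (x + x', a + b)),
      (forall (r : R) x a, H (x, a) -> H (r%:C *: x, r * a)) &
      (forall x a, H (x, a) -> a <= nx x)].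

Variables (L : set X) (y : X) (dr : R).
Hypotheses (sL : lsub L) (nLy : ~ L y) (dr0 : 0 < dr)
  (hdr : forall l, L l -> dr <= nx (y - l)).

Definition HG0 : set (X * R) :=
  [set q | exists l t, L l /\ q = (l + t *: y, Re t * dr)].

Lemma sL0 : L 0. Proof. by case: sL. Qed.
Lemma sLD a b : L a -> L b -> L (a + b). Proof. by case: sL => _ [h _]; apply: h. Qed.
Lemma sLZ (t : R[i]) a : L a -> L (t *: a). Proof. by case: sL => _ [_ h]; apply: h. Qed.
Lemma sLB a b : L a -> L b -> L (a - b).
Proof. by move=> La Lb; apply: sLD => //; rewrite -scaleN1r; apply: sLZ. Qed.

Lemma G0_uniq l t l' t' : L l -> L l' -> l + t *: y = l' + t' *: y -> t = t'.
Proof.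
move=> Ll Ll' e; apply/eqP; apply: contrapT => /negP tt.
apply: nLy.
have -> : y = (t - t')^-1 *: (l' - l).
  apply: (@scalerI _ _ (t - t')); first by rewrite subr_eq0.
  rewrite scalerA mulfV ?subr_eq0 // scale1r scalerBl.
  by rewrite -(addKr l (t *: y)) e addrA addrK addrC.
by apply: sLZ; apply: sLB.
Qed.

Lemma Re_add (s t : R[i]) : Re (s + t) = Re s + Re t.
Proof. by case: s t => [a b] [c d]. Qed.
Lemma Re_mulR (r : R) (t : R[i]) : Re (r%:C * t) = r * Re t.
Proof. by case: t => [a b] /=; rewrite mul0r subr0. Qed.

Lemma Pg_G0 : Pg HG0.
Proof.
split.
- move=> x a b [l [t [Ll [-> ->]]]] [l' [t' [Ll' [e ->]]]].
  by rewrite (G0_uniq Ll Ll' e).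
- move=> x a x' b [l [t [Ll [-> ->]]]] [l' [t' [Ll' [-> ->]]]].
  exists (l + l'), (t + t'); split; first exact: sLD.
  by rewrite scalerDl addrACA Re_add mulrDl.
- move=> r x a [l [t [Ll [-> ->]]]].
  exists (r%:C *: l), (r%:C * t); split; first exact: sLZ.
  by rewrite scalerDr scalerA Re_mulR mulrA.
- move=> x a [l [t [Ll [-> ->]]]].
  have [->|t0] := eqVneq t 0.
    by rewrite mul0r nx_ge0.
  have -> : l + t *: y = t *: (y - (- t^-1 *: l)).
    by rewrite scaleNr opprK scalerDr scalerA mulfV // scale1r addrC.
  rewrite nxZ; apply: le_trans (_ : Re `|t| * dr <= _).
    by apply: ler_wpM2r; [apply: ltW|apply: Re_le_norm].
  rewrite ler_wpM2l //; first by have := normr_ge0 t; rewrite lecE => /andP [].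
  by apply: hdr; apply: sLZ.
Qed.



Definition Pz (H : set (X * R)) := Pg (H `|` HG0).

Lemma common (F : set (set (X * R))) q1 q2 : F `<=` Pz -> total_on F subset ->
  ((\bigcup_(H in F) H) `|` HG0) q1 -> ((\bigcup_(H in F) H) `|` HG0) q2 ->
  exists H, [/\ Pg H, H `<=` (\bigcup_(H in F) H) `|` HG0, H q1 & H q2].
Proof.
move=> FP tF h1 h2.
have sub G : F G -> G `|` HG0 `<=` (\bigcup_(H in F) H) `|` HG0.
  by move=> FG q [Gq|G0q]; [left; exists G|right].
case: h1 => [[G1 FG1 G1q]|G0q1]; case: h2 => [[G2 FG2 G2q]|G0q2].
- have [G12|G21] := tF _ _ FG1 FG2.
    exists (G2 `|` HG0); split; [exact: FP|exact: sub|left; exact: G12|by left].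
  exists (G1 `|` HG0); split; [exact: FP|exact: sub|by left|left; exact: G21].
- by exists (G1 `|` HG0); split; [exact: FP|exact: sub|left|right].
- by exists (G2 `|` HG0); split; [exact: FP|exact: sub|right|left].
- by exists HG0; split; [exact: Pg_G0|move=> q; right| |].
Qed.

Lemma chain_ub (F : set (set (X * R))) : F `<=` Pz -> total_on F subset ->
  Pz (\bigcup_(H in F) H).
Proof.
move=> FP tF; split.
- move=> x a b h1 h2; have [H [[f _ _ _] _ H1 H2]] := common FP tF h1 h2.
  exact: f H1 H2.
- move=> x a x' b h1 h2; have [H [[_ f _ _] s H1 H2]] := common FP tF h1 h2.
  exact: s (f _ _ _ _ H1 H2).
- move=> r x a h1; have [H [[_ _ f _] s H1 _]] := common FP tF h1 h1.
  exact: s (f _ _ _ H1).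
- move=> x a h1; have [H [[_ _ _ f] _ H1 _]] := common FP tF h1 h1.
  exact: f.
Qed.



Lemma nxZR (r : R) x : nx (r%:C *: x) = `|r| * nx x.
Proof. by rewrite nxZ normRC. Qed.

Lemma extend (H : set (X * R)) z : Pg H -> H (0, 0) -> (forall a, ~ H (z, a)) ->
  exists c, Pg [set q | exists x a (r : R), H (x, a) /\ q = (x + r%:C *: z, a + r * c)].
Proof.
move=> [Hf Ha Hs Hb] H00 nz.
pose S := [set v | exists x a, H (x, a) /\ v = a - nx (x - z)].
have key x a x' a' : H (x, a) -> H (x', a') -> a - nx (x - z) <= nx (x' + z) - a'.
  move=> h h'; have := Hb _ _ (Ha _ _ _ _ h h').
  have : nx (x + x') <= nx (x - z) + nx (x' + z).
    have -> : x + x' = (x - z) + (x' + z) by rewrite addrACA addNr addr0.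
    exact: nxD.
  move=> h1 h2; have := le_trans h2 h1; lra.
have S0 : S !=set0 by exists (0 - nx (0 - z)), 0, 0.
have ubS : ubound S (nx (0 + z) - 0) by move=> _ [x [a [h ->]]]; apply: key.
exists (sup S); split.
- move=> w b1 b2 [x [a [r [h1 [-> ->]]]]] [x' [a' [r' [h2 [e ->]]]]].
  have rr : r = r'.
    apply: contrapT => rr; apply: (nz ((r - r')^-1 * (a' - a))).
    have -> : z = ((r - r')^-1)%:C *: (x' - x).
      have e' : (r - r')%:C *: z = x' - x.
        rewrite rmorphB /= scalerBl; apply/eqP; rewrite subr_eq.
        by rewrite -(addKr x (r%:C *: z)) e addrA (addrC (- x)).
      rewrite -e' scalerA -rmorphM /= mulVf ?subr_eq0; last by apply/eqP.
      by rewrite scale1r.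
    apply: (Hs); apply: (Ha) => //; have := Hs (-1) _ _ h1.
    by rewrite rmorphN1 scaleN1r mulN1r.
  move: e; rewrite -rr => /addIr ex; rewrite ex in h1.
  by rewrite (Hf _ _ _ h1 h2).
- move=> w b w' b' [x [a [r [h1 [-> ->]]]]] [x' [a' [r' [h2 [-> ->]]]]].
  rewrite /=; exists (x + x'), (a + a'), (r + r'); split; first exact: Ha.
  by rewrite rmorphD scalerDl mulrDl; congr (_, _); rewrite addrACA.
- move=> s w b [x [a [r [h1 [-> ->]]]]].
  rewrite /=; exists (s%:C *: x), (s * a), (s * r); split; first exact: Hs.
  by rewrite scalerDr scalerA -rmorphM mulrDr mulrA.
- move=> w b [x [a [r [h1 [-> ->]]]]].
  have [r0|r0|->] := ltgtP r 0; last first.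
  + by rewrite mul0r addr0 rmorph0 scale0r addr0; apply: Hb.
  + have h := Hs (r^-1) _ _ h1.
    have c2 : sup S <= nx (r^-1%:C *: x + z) - r^-1 * a.
      by apply: ge_sup S0 _ => _ [x0 [a0 [h0 ->]]]; apply: key h0 h.
    have h' := ler_wpM2l (ltW r0) c2.
    rewrite mulrBr mulrA mulfV ?gt_eqF // mul1r in h'.
    have -> : x + r%:C *: z = r%:C *: (r^-1%:C *: x + z).
      by rewrite scalerDr scalerA -rmorphM mulfV ?gt_eqF // rmorph1 scale1r.
    rewrite nxZR gtr0_norm //; lra.
  + pose s := - r; have s0 : 0 < s by rewrite /s oppr_gt0.
    have rs : r = - s by rewrite /s opprK.
    have h := Hs (s^-1) _ _ h1.
    have hS : S (s^-1 * a - nx (s^-1%:C *: x - z)) by exists (s^-1%:C *: x), (s^-1 * a).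
    have c1 := ub_le_sup (ex_intro _ _ ubS) hS.
    have h' := ler_wpM2l (ltW s0) c1.
    rewrite mulrBr mulrA mulfV ?gt_eqF // mul1r in h'.
    have -> : x + r%:C *: z = s%:C *: (s^-1%:C *: x - z).
      by rewrite scalerBr scalerA -rmorphM mulfV ?gt_eqF // rmorph1 scale1r rs rmorphN scaleNr.
    rewrite nxZR gtr0_norm // rs; lra.
Qed.



Lemma real_HB : exists phi : X -> R,
  [/\ (forall (r : R) x x', phi (r%:C *: x + x') = r * phi x + phi x'),
      (forall x, phi x <= nx x) &
      (forall l t, L l -> phi (l + t *: y) = Re t * dr)].
Proof.
have [A [PA Amax]] := Zorn_bigcup (fun F => @chain_ub F).
pose H := A `|` HG0.
have [Hf Ha Hs Hb] : Pg H := PA.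
have H00 : H (0, 0).
  right; exists 0, 0; split; first exact: sL0.
  by rewrite scale0r addr0 mul0r.
have dom z : exists a, H (z, a).
  apply: contrapT => /forallNP nz.
  have [c Pc] := extend (PA) H00 nz.
  pose H' := [set q | exists x a (r : R), H (x, a) /\ q = (x + r%:C *: z, a + r * c)].
  have HH' : H `<=` H'.
    by move=> [x a] h; exists x, a, 0; split => //; rewrite mul0r addr0 rmorph0 scale0r addr0.
  apply: (Amax H').
    split; first by move=> q Aq; apply: HH'; left.
    move=> /(_ (z, c)) h.
    have : A (z, c).
      apply: h; exists 0, 0, 1; split => //.
      by rewrite rmorph1 scale1r add0r mul1r add0r.
    by move=> Azc; apply: (nz c); left.
  rewrite /Pz; have -> : H' `|` HG0 = H'.
    by apply/seteqP; split => q; [case=> // G0q; apply: HH'; right|left].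
  exact: Pc.
pose phi x := projT1 (cid (dom x)).
have phiP x : H (x, phi x) by rewrite /phi; case: cid.
exists phi; split.
- move=> r x x'; apply: Hf (phiP _) _.
  by apply: Ha; [apply: Hs; apply: phiP|apply: phiP].
- by move=> x; apply: Hb; apply: phiP.
- move=> l t Ll; apply: Hf (phiP _) _; right.
  by exists l, t.
Qed.



Definition ii : R[i] := Complex 0 1.

Lemma cont_bound (f : X -> (R[i] : numFieldType)) (k : R[i]) : 0 <= k ->
  (forall x x', f x - f x' = f (x - x')) -> (forall x, `|f x| <= k * `|x|) ->
  continuous f.
Proof.
move=> k0 fB fb x; apply/cvgrPdist_lt => e e0.
have k1 : 0 < k + 1 by rewrite ltr_wpDl.
apply/nbhs_normP; exists (e / (k + 1)) => /=; first by rewrite divr_gt0.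
move=> t /= xt; rewrite fB; apply: le_lt_trans (fb _) _.
apply: le_lt_trans (_ : (k + 1) * `|x - t| < e).
  by apply: ler_wpM2r => //; rewrite lerDl.
by rewrite mulrC -ltr_pdivlMr.
Qed.


Lemma complex_HB : exists g : X -> R[i],
  dual_vec g /\ (forall x, L x -> g x = 0) /\ g y = 1.
Proof.
have [phi [lphi bphi Gphi]] := real_HB.
have phi0 : phi 0 = 0.
  have := lphi 1 0 0; rewrite scale1r addr0 mul1r => h.
  by apply: (addrI (phi 0)); rewrite addr0 -h.
have phiD x x' : phi (x + x') = phi x + phi x'.
  by have := lphi 1 x x'; rewrite scale1r mul1r.
have phiZ (r : R) x : phi (r%:C *: x) = r * phi x.
  by have := lphi r x 0; rewrite !addr0 phi0 addr0.
have phiN x : phi (- x) = - phi x.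
  by rewrite -scaleN1r (_ : (-1 : R[i]) = (-1 : R)%:C) ?phiZ ?mulN1r // rmorphN1.
have iiN (x : X) : ii *: (ii *: x) = - x.
  have hi : ii * ii = -1.
    by apply/eqP; rewrite eq_complex /= !(mul0r, mulr0, mul1r, mulr1, sub0r, addr0, oppr0) !eqxx.
  by rewrite scalerA hi scaleN1r.
have aE (a : R[i]) (x : X) : a *: x = (Re a)%:C *: x + (Im a)%:C *: (ii *: x).
  by rewrite scalerA -scalerDl mulrC -complexE.
pose g x : R[i] := Complex (phi x / dr) (- phi (ii *: x) / dr).
have lg : forall (a : R[i]) x x', g (a *: x + x') = a * g x + g x'.
  move=> a x x'; rewrite /g.
  set u := phi x; set v := phi (ii *: x); set u' := phi x'; set v' := phi (ii *: x').
  have e1 : phi (a *: x + x') = Re a * u + Im a * v + u'.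
    by rewrite phiD aE phiD !phiZ.
  have e2 : phi (ii *: (a *: x + x')) = Re a * v - Im a * u + v'.
    by rewrite scalerDr phiD (aE a x) scalerDr phiD !scalerA !(mulrC ii) -!scalerA iiN !phiZ
      phiN mulrN.
  rewrite e1 e2; case: a {e1 e2} => al be /=.
  apply/eqP; rewrite eq_complex /=; apply/andP; split; apply/eqP; field;
    by rewrite gt_eqF.
have phib x : `|phi x| <= nx x.
  rewrite ler_norml bphi andbT lerNl -phiN -(nxN x); exact: bphi.
have nii x : nx (ii *: x) = nx x.
  by rewrite nxZ normc_def /= expr0n /= expr1n add0r sqrtr1 mul1r.
have nRC (r : R) : `|r%:C| = `|r|%:C by rewrite normC_real normRC.
have nii1 : `|ii| = 1.
  by rewrite normc_def /= expr0n /= expr1n add0r sqrtr1.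
exists g; split; [split|split].
- exact: lg.
- apply: (@cont_bound _ (2 / dr)%:C).
  + by rewrite ler0c divr_ge0 // ltW.
  + move=> x x'; have -> : x - x' = (-1) *: x' + x by rewrite scaleN1r addrC.
    by rewrite lg mulN1r addrC.
  + move=> x.
    have -> : g x = (phi x / dr)%:C + ii * (- phi (ii *: x) / dr)%:C.
      apply/eqP; rewrite eq_complex /=.
      by rewrite !(mul0r, mulr0, mul1r, mulr1, subr0, sub0r, addr0, add0r) !eqxx.
    apply: le_trans (ler_normD _ _) _.
    rewrite normrM nii1 mul1r !nRC -rmorphD normX_real -rmorphM lecR.
    have hu : `|phi x / dr| <= nx x / dr.
      by rewrite normrM (@gtr0_norm _ dr^-1) ?invr_gt0 // ler_pM2r ?invr_gt0.
    have hv : `|- phi (ii *: x) / dr| <= nx x / dr.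
      rewrite normrM normrN (@gtr0_norm _ dr^-1) ?invr_gt0 // ler_pM2r ?invr_gt0 //.
      by rewrite -(nii x).
    have -> : 2 / dr * nx x = nx x / dr + nx x / dr by field; rewrite gt_eqF.
    exact: lerD.
- move=> l Ll; rewrite /g.
  have h1 := Gphi l 0 Ll; rewrite scale0r addr0 /= mul0r in h1.
  have h2 := Gphi (ii *: l) 0 (sLZ ii Ll); rewrite scale0r addr0 /= mul0r in h2.
  by rewrite h1 h2; apply/eqP; rewrite eq_complex /= mul0r oppr0 mul0r !eqxx.
- rewrite /g.
  have h1 := Gphi 0 1 sL0; rewrite add0r scale1r /= mul1r in h1.
  have h2 := Gphi 0 ii sL0; rewrite add0r /= mul0r in h2.
  by rewrite h1 h2; apply/eqP; rewrite eq_complex /= (mulfV (negbT (gt_eqF dr0))) eqxx /= mulNr mul0r oppr0.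
Qed.

End HB.

Lemma HB_complex (R : realType) (X : normedModType R[i]) : @HBprop R[i] X.
Proof.
move=> L y sL cL nLy.
have [dr dr0 hdr] := dist_pos cL nLy.
exact: (complex_HB sL nLy dr0 hdr).
Qed.


Theorem mainTheorem15 (R : realType) (X : completeNormedModType R[i])
  (E : set (set X)) (Psi : set X -> set X) :
  is_nest E -> ess_support_function E Psi ->
  (bimodule E (Me E Psi) /\
     forall J : set (X -> X), bimodule E J ->
       (forall N, E N -> Phi_e E J N = Psi N) -> J `<=` Me E Psi) /\
  (bimodule E (M0 E Psi) /\
     forall J : set (X -> X), bimodule E J -> norm_closed J ->
       (forall N, E N -> Phi_e E J N = Psi N) -> M0 E Psi `<=` J).
Proof.
move=> hE _; split; split.
- exact: Me_bimod.
- by move=> J; apply: J_sub_Me.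
- exact: M0_bimod.
- by move=> J; apply: M0_sub_J => //; apply: HB_complex.
Qed.
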